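(* For $\tau,\kappa\in\mathbb{R}$ and integer $n\ge0$, let $$\mu_{2n}(\tau;\kappa)=\int_{-\infty}^{\infty}x^{2n}\exp\{-(x^6-\tau x^4+\kappa\tau^2x^2)\}\,dx.$$ Then $$\mu_{2n}(\tau;\kappa)=\tfrac13\sum_{j=0}^{\infty}\left\{\frac{\Gamma\left(\tfrac23j+\tfrac13n+\tfrac16\right)}{\left(\tfrac12\right)_j}\tau^jL_j^{(-1/2)}(\zeta)-\kappa\frac{\Gamma\left(\tfrac23j+\tfrac13n+\tfrac12\right)}{\left(\tfrac32\right)_j}\tau^{j+2}L_j^{(1/2)}(\zeta)\right\},$$ where $\zeta=-\tfrac14\kappa^2\tau^3$.
   Context: $L_j^{(\alpha)}$ denotes the (standard, generalised) Laguerre polynomial of degree $j$ and parameter $\alpha$. $(a)_j$ denotes the Pochhammer symbol. *)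

(* Defs.v *)
From Stdlib Require Import Reals Arith.
From Coquelicot Require Import Coquelicot.
Open Scope R_scope.

Fixpoint pochhammer (a : R) (j : nat) : R :=
  match j with
  | O => 1
  | S k => pochhammer a k * (a + INR k)
  end.

(* Generalised Laguerre polynomial:
   L_j^(alpha)(x) = sum_{i=0}^j (-1)^i binom(j+alpha, j-i) x^i / i!,
   with binom(j+alpha, j-i) = (alpha+i+1)_{j-i} / (j-i)!. *)
Definition laguerre (j : nat) (alpha x : R) : R :=
  sum_n (fun i => (-1) ^ i * pochhammer (alpha + INR i + 1) (j - i)
                  / (INR (Factorial.fact (j - i)) * INR (Factorial.fact i)) * x ^ i) j.

Definition Gamma (s : R) : R :=
  RInt_gen (fun t => Rpower t (s - 1) * exp (- t))
           (at_right 0) (Rbar_locally p_infty).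

Definition mu_integrand (n : nat) (tau kappa x : R) : R :=
  x ^ (2 * n) * exp (- (x ^ 6 - tau * x ^ 4 + kappa * tau ^ 2 * x ^ 2)).

Definition mu_term (n : nat) (tau kappa : R) (j : nat) : R :=
  let zeta := - (1 / 4) * kappa ^ 2 * tau ^ 3 in
  Gamma (2 / 3 * INR j + 1 / 3 * INR n + 1 / 6) / pochhammer (1 / 2) j
    * tau ^ j * laguerre j (- (1 / 2)) zeta
  - kappa * (Gamma (2 / 3 * INR j + 1 / 3 * INR n + 1 / 2) / pochhammer (3 / 2) j)
    * tau ^ (j + 2) * laguerre j (1 / 2) zeta.

(* Main.v *)
Require Import Defs.
From Stdlib Require Import Reals Lra Lia Psatz.
From Coquelicot Require Import Coquelicot.
Open Scope R_scope.

Definition cc (k : nat) (s : R) := s ^ k / INR (Factorial.fact k).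

Lemma sum_n_nonneg (b : nat -> R) K : (forall k, 0 <= b k) -> 0 <= sum_n b K.
Proof.
  intros Hb; induction K.
  - rewrite sum_O; apply Hb.
  - rewrite sum_Sn; unfold plus; simpl; specialize (Hb (S K)); lra.
Qed.

Lemma sum_n_mono (b : nat -> R) K m : (forall k, 0 <= b k) -> (K <= m)%nat ->
  sum_n b K <= sum_n b m.
Proof.
  intros Hb H; induction H; [lra|].
  rewrite sum_Sn; unfold plus; simpl; specialize (Hb (S m)); lra.
Qed.

Lemma psum_le (b : nat -> R) l K : (forall k, 0 <= b k) -> is_series b l -> sum_n b K <= l.
Proof.
  intros Hb Hs.
  assert (H := filterlim_le (F := eventually) (fun _ => sum_n b K) (sum_n b) (sum_n b K) l).
  simpl in H. apply H.
  - exists K; intros m Hm; apply sum_n_mono; auto.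
  - apply filterlim_const.
  - exact Hs.
Qed.

Lemma exp_series s : is_series (fun k => cc k s) (exp s).
Proof.
  eapply is_series_ext; [|apply (is_exp_Reals s)].
  intros k; simpl. unfold scal; simpl; unfold mult; simpl. rewrite pow_n_pow. unfold cc, Rdiv. ring.
Qed.

Lemma cc_nonneg k t : 0 <= t -> 0 <= cc k t.
Proof.
  intros; unfold cc; apply Rdiv_le_0_compat; [apply pow_le; auto| apply lt_0_INR, Factorial.lt_O_fact].
Qed.

Lemma cc_le_exp t k : 0 <= t -> cc k t <= exp t.
Proof.
  intros Ht. apply Rle_trans with (sum_n (fun k => cc k t) k).
  - destruct k. rewrite sum_O; lra. rewrite sum_Sn; unfold plus; simpl.
    assert (0 <= sum_n (fun k => cc k t) k) by (apply sum_n_nonneg; intros; apply cc_nonneg; auto). lra.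
  - apply psum_le; [intros; apply cc_nonneg; auto| apply exp_series].
Qed.

Lemma cc_abs k s : Rabs (cc k s) = (1/2)^k * cc k (2 * Rabs s).
Proof.
  unfold cc. rewrite Rabs_div. rewrite <- RPow_abs.
  rewrite (Rabs_right (INR _)).
  replace ((1/2)^k * ((2*Rabs s)^k / INR (Factorial.fact k))) with
    (((1/2)*2)^k * Rabs s ^k / INR (Factorial.fact k)) by (rewrite !Rpow_mult_distr; unfold Rdiv; ring).
  replace (1/2*2) with 1 by field. rewrite pow1, Rmult_1_l; reflexivity.
  apply Rle_ge, pos_INR.
  apply not_0_INR, Factorial.fact_neq_0.
Qed.

Lemma half_pow_mono k m : (k <= m)%nat -> (1/2)^m <= (1/2)^k.
Proof.
  intros H. induction H; [lra|]. simpl.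
  assert (0 <= (1/2)^m) by (apply pow_le; lra). lra.
Qed.

Lemma exp_tail s K : Rabs (exp s - sum_n (fun k => cc k s) K) <= (1/2)^(S K) * exp (2 * Rabs s).
Proof.
  set (a := fun k => cc k s). set (b := fun k => cc k (2 * Rabs s)).
  assert (Hb : forall k, 0 <= b k) by (intros; apply cc_nonneg; pose proof (Rabs_pos s); lra).
  assert (Hp : 0 <= (1/2)^(S K)) by (apply pow_le; lra).
  assert (Hm : forall m, (K <= m)%nat -> Rabs (sum_n a m - sum_n a K) <= (1/2)^(S K) * (sum_n b m - sum_n b K)).
  { intros m H; induction H.
    - rewrite Rminus_diag, Rabs_R0; lra.
    - rewrite !sum_Sn; unfold plus; simpl.
      replace (sum_n a m + a (S m) - sum_n a K) with ((sum_n a m - sum_n a K) + a (S m)) by ring.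
      eapply Rle_trans; [apply Rabs_triang|].
      replace (Rabs (a (S m))) with ((1/2)^(S m) * b (S m)) by (unfold a, b; rewrite cc_abs; reflexivity).
      assert ((1/2)^(S m) <= (1/2)^(S K)) by (apply half_pow_mono; lia).
      specialize (Hb (S m)).
      assert ((1/2)^(S m) * b (S m) <= (1/2)^(S K) * b (S m)) by (apply Rmult_le_compat_r; auto).
      change (1/2 * (1/2)^K) with ((1/2)^(S K)). nra. }
  assert (H := filterlim_le (F := eventually) (fun m => Rabs (sum_n a m - sum_n a K))
           (fun _ => (1/2)^(S K) * exp (2 * Rabs s)) (Rabs (exp s - sum_n a K)) ((1/2)^(S K) * exp (2 * Rabs s))).
  simpl in H; apply H.
  - exists K; intros m HKm. eapply Rle_trans; [apply Hm; auto|].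
    apply Rmult_le_compat_l; auto.
    assert (0 <= sum_n b K) by (apply sum_n_nonneg; auto).
    assert (sum_n b m <= exp (2 * Rabs s)) by (apply psum_le; auto; apply exp_series). lra.
  - apply (is_lim_seq_abs (fun m => sum_n a m - sum_n a K) (exp s - sum_n a K)).
    apply is_lim_seq_minus'; [apply exp_series| apply is_lim_seq_const].
  - apply is_lim_seq_const.
Qed.

Lemma exp_le_mono x y : x <= y -> exp x <= exp y.
Proof. intros [H|H]; [left; apply exp_increasing; auto| subst; lra]. Qed.

Lemma cubic_bound A B t : 0 <= A -> 0 <= B -> 0 <= t ->
  - t^3 + A * t^2 + (B+1) * t + 1 <= A * (A+B+2)^2 + (B+1) * (A+B+2) + 1.
Proof.
  intros HA HB Ht. set (T := A + B + 2).
  destruct (Rle_lt_dec t T) as [H|H].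
  - assert (A * t^2 <= A * T^2) by (apply Rmult_le_compat_l; auto; apply pow_incr; lra).
    assert ((B+1) * t <= (B+1) * T) by (apply Rmult_le_compat_l; lra).
    assert (0 <= t^3) by (apply pow_le; auto).
    lra.
  - assert (t^3 >= T * t^2) by (simpl; nra).
    assert (t^2 >= t) by (simpl; unfold T in H; nra).
    assert (0 <= A * T^2) by (apply Rmult_le_pos; auto; apply pow_le; unfold T; lra).
    assert (0 <= (B+1) * T) by (apply Rmult_le_pos; unfold T; lra).
    unfold T in *. nra.
Qed.

Lemma poly_exp_bound n A B : 0 <= A -> 0 <= B -> exists K, 0 < K /\
  forall x, (1 + x^2) * (x^(2*n) * exp (-(x^6) + A * x^4 + B * x^2)) <= K.
Proof.
  intros HA HB.
  set (D := A * (A+B+2)^2 + (B+1) * (A+B+2) + 1).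
  exists (INR (Factorial.fact (S n)) * exp D). split.
  { apply Rmult_lt_0_compat; [apply lt_0_INR, Factorial.lt_O_fact| apply exp_pos]. }
  intros x. set (t := x^2).
  assert (Ht : 0 <= t) by (unfold t; apply pow2_ge_0).
  replace (x^(2*n)) with (t^n) by (unfold t; rewrite pow_mult; reflexivity).
  replace (x^6) with (t^3) by (unfold t; rewrite <- pow_mult; reflexivity).
  replace (x^4) with (t^2) by (unfold t; rewrite <- pow_mult; reflexivity).
  assert (H1 : (1 + t) * t^n <= (1+t)^(S n)).
  { simpl. apply Rmult_le_compat_l; [lra|]. apply pow_incr; lra. }
  assert (H2 : (1+t)^(S n) <= INR (Factorial.fact (S n)) * exp (1 + t)).
  { pose proof (cc_le_exp (1+t) (S n) ltac:(lra)) as H. unfold cc in H.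
    assert (0 < INR (Factorial.fact (S n))) by apply lt_0_INR, Factorial.lt_O_fact.
    apply Rmult_le_compat_l with (r := INR (Factorial.fact (S n))) in H; [|lra].
    field_simplify in H; lra. }
  assert (H3 : exp (- t^3 + A * t^2 + B * t) * exp (1 + t) <= exp D).
  { rewrite <- exp_plus. apply exp_le_mono. pose proof (cubic_bound A B t HA HB Ht). unfold D. lra. }
  assert (0 <= exp (- t^3 + A * t^2 + B * t)) by (left; apply exp_pos).
  assert (0 <= t^n) by (apply pow_le; auto).
  replace ((1 + t) * (t ^ n * exp (- t ^ 3 + A * t ^ 2 + B * t))) with (((1+t) * t^n) * exp (- t ^ 3 + A * t ^ 2 + B * t)) by ring.
  eapply Rle_trans. { apply Rmult_le_compat_r; [auto|]. eapply Rle_trans; [exact H1| exact H2]. }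
  assert (0 < INR (Factorial.fact (S n))) by apply lt_0_INR, Factorial.lt_O_fact.
  replace (INR (Factorial.fact (S n)) * exp (1 + t) * exp (- t ^ 3 + A * t ^ 2 + B * t))
    with (INR (Factorial.fact (S n)) * (exp (- t ^ 3 + A * t ^ 2 + B * t) * exp (1 + t))) by ring.
  apply Rmult_le_compat_l; lra.
Qed.

Lemma cont_of_derive (f : R -> R) x : ex_derive f x -> continuous f x.
Proof. apply (ex_derive_continuous (K:=R_AbsRing) (V:=R_NormedModule)). Qed.

Lemma ex_RInt_cont (f : R -> R) a b :
  (forall z, Rmin a b <= z <= Rmax a b -> continuous f z) -> ex_RInt f a b.
Proof. apply (ex_RInt_continuous (V:=R_CompleteNormedModule)). Qed.

Lemma atan_int a b : is_RInt (fun x => / (1 + x^2)) a b (atan b - atan a).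
Proof.
  apply (is_RInt_derive atan (fun x => / (1 + x^2))).
  - intros x _. apply is_derive_Reals, derivable_pt_lim_atan.
  - intros x _. apply cont_of_derive. auto_derive.
    pose proof (pow2_ge_0 x). simpl in *; lra.
Qed.

Lemma int_bound (h : R -> R) K a b : a <= b -> (forall x, continuous h x) -> 0 <= K ->
  (forall x, (1 + x^2) * h x <= K) -> RInt h a b <= K * PI.
Proof.
  intros Hab Hc HK Hh.
  assert (Hex : ex_RInt (fun x => K * / (1 + x^2)) a b).
  { apply ex_RInt_cont. intros z _. apply cont_of_derive. auto_derive.
    pose proof (pow2_ge_0 z). simpl in *; lra. }
  apply Rle_trans with (RInt (fun x => K * / (1 + x^2)) a b).
  - apply RInt_le; auto.
    + apply ex_RInt_cont; intros; auto.
    + intros x _. pose proof (pow2_ge_0 x). specialize (Hh x).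
      apply Rmult_le_reg_l with (1 + x^2); [lra|].
      field_simplify; [lra| lra].
  - replace (RInt (fun x => K * / (1 + x^2)) a b) with (K * (atan b - atan a)).
    + pose proof (atan_bound a); pose proof (atan_bound b).
      apply Rmult_le_compat_l; auto. lra.
    + symmetry. apply is_RInt_unique.
      apply (is_RInt_scal (V:=R_NormedModule) _ _ _ K _ (atan_int a b)).
Qed.

Ltac fixR := match goal with |- @eq _ ?x ?y => change (@eq R x y) end.

Lemma ball_R (x e y : R) : ball x e y <-> Rabs (y - x) < e.
Proof. reflexivity. Qed.

Definition mN (N : nat) (x : R) := x^(2*N) * exp (-(x^6)).

Lemma mN_cont N x : continuous (mN N) x.
Proof. apply cont_of_derive. unfold mN. auto_derive. auto. Qed.

Lemma mN_ex N a b : ex_RInt (mN N) a b.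
Proof. apply ex_RInt_cont. intros; apply mN_cont. Qed.

Lemma pow_even_nonneg x N : 0 <= x^(2*N).
Proof. rewrite pow_mult. apply pow_le, pow2_ge_0. Qed.

Lemma mN_nonneg N x : 0 <= mN N x.
Proof. unfold mN. apply Rmult_le_pos; [apply pow_even_nonneg| left; apply exp_pos]. Qed.

Lemma mN_even N x : mN N (-x) = mN N x.
Proof.
  unfold mN. rewrite !pow_mult. replace 6%nat with (2*3)%nat by reflexivity.
  rewrite !pow_mult. replace ((-x)^2) with (x^2) by ring. reflexivity.
Qed.

Lemma mN_bound N : exists K, 0 < K /\ forall x, (1 + x^2) * mN N x <= K.
Proof.
  destruct (poly_exp_bound N 0 0) as [K [HK H]]; try lra.
  exists K; split; auto. intros x. specialize (H x). unfold mN.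
  replace (-(x^6)) with (-(x^6) + 0 * x^4 + 0 * x^2) by ring. exact H.
Qed.

Lemma mN_le1 N x : -1 <= x <= 1 -> Rabs (mN N x) <= 1.
Proof.
  intros Hx. rewrite Rabs_right by (apply Rle_ge, mN_nonneg). unfold mN.
  assert (x^(2*N) <= 1).
  { rewrite pow_mult. rewrite <- (pow1 N). apply pow_incr. split; [apply pow2_ge_0|]. simpl. nra. }
  assert (exp (-(x^6)) <= 1).
  { rewrite <- exp_0. apply exp_le_mono. assert (0 <= x^6) by (replace 6%nat with (2*3)%nat by reflexivity; apply pow_even_nonneg). lra. }
  assert (0 <= exp (-(x^6))) by (left; apply exp_pos).
  assert (0 <= x^(2*N)) by apply pow_even_nonneg.
  nra.
Qed.

Definition Phi N b : R := RInt (mN N) 0 b.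

Lemma RInt_diff N a b : @eq R (RInt (mN N) a b) (Phi N b - Phi N a).
Proof.
  unfold Phi. rewrite <- (RInt_Chasles (mN N) 0 a b) by apply mN_ex.
  unfold plus; simpl. generalize (RInt (mN N) 0 a : R) (RInt (mN N) a b : R). intros u v. ring.
Qed.

Lemma Phi_mono N b b' : b <= b' -> Phi N b <= Phi N b'.
Proof.
  intros H. assert (0 <= RInt (mN N) b b').
  { apply RInt_ge_0; auto. apply mN_ex. intros; apply mN_nonneg. }
  rewrite RInt_diff in H0. lra.
Qed.

Lemma Phi_bounded N : exists M, forall b, Phi N b <= M.
Proof.
  destruct (mN_bound N) as [K [HK H]]. exists (K * PI). intros b.
  destruct (Rle_lt_dec 0 b).
  - apply int_bound; auto; [apply mN_cont| lra].
  - assert (Phi N b <= Phi N 0) by (apply Phi_mono; lra).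
    assert (Phi N 0 = 0) by (unfold Phi; rewrite RInt_point; reflexivity).
    pose proof PI_RGT_0. assert (0 <= K * PI) by nra. lra.
Qed.

Lemma Phi_lim N : exists L, forall eps, 0 < eps -> exists M, forall b, M < b -> Rabs (Phi N b - L) < eps.
Proof.
  destruct (Phi_bounded N) as [M HM].
  set (E := fun y => exists b, y = Phi N b).
  destruct (completeness E) as [L [HL1 HL2]].
  { exists M. intros y [b ->]. auto. }
  { exists (Phi N 0), 0; auto. }
  exists L. intros eps Heps.
  assert (exists b0, L - eps < Phi N b0).
  { apply Classical_Pred_Type.not_all_not_ex. intros Hn.
    assert (L <= L - eps); [|lra].
    apply HL2. intros y [b ->]. specialize (Hn b). lra. }
  destruct H as [b0 Hb0]. exists b0. intros b Hb.
  assert (Phi N b0 <= Phi N b) by (apply Phi_mono; lra).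
  assert (Phi N b <= L) by (apply HL1; exists b; auto).
  apply Rabs_def1; lra.
Qed.

Lemma Phi_odd N b : Phi N (-b) = - Phi N b.
Proof.
  unfold Phi.
  assert (H := is_RInt_comp_opp (V:=R_NormedModule) (mN N) 0 b (RInt (mN N) (-0) (-b))).
  assert (H' : is_RInt (fun y => opp (mN N (- y))) 0 b (RInt (mN N) (- 0) (- b))).
  { apply H. apply (RInt_correct (V:=R_CompleteNormedModule)). apply mN_ex. }
  apply (is_RInt_unique (V:=R_CompleteNormedModule)) in H'. rewrite Ropp_0 in H'. rewrite <- H'.
  rewrite (RInt_ext _ (fun y => opp (mN N y))) by (intros; rewrite mN_even; reflexivity).
  rewrite (RInt_opp (V:=R_CompleteNormedModule)) by apply mN_ex. reflexivity.
Qed.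

Lemma Phi_small N a : 0 <= a <= 1 -> Rabs (Phi N a) <= a.
Proof.
  intros Ha. unfold Phi.
  replace a with ((a - 0) * 1) at 2 by ring.
  apply abs_RInt_le_const; [lra| apply mN_ex|]. intros; apply mN_le1; lra.
Qed.

Lemma is_RInt_gen_intro (f : R -> R) Fa Fb (l : R) (If : R -> R -> R) :
  Filter Fa -> Filter Fb ->
  filter_prod Fa Fb (fun ab => is_RInt f (fst ab) (snd ab) (If (fst ab) (snd ab))) ->
  (forall eps : posreal, filter_prod Fa Fb (fun ab => Rabs (If (fst ab) (snd ab) - l) < eps)) ->
  is_RInt_gen f Fa Fb l.
Proof.
  intros FFa FFb H1 H2 P [eps HP]. unfold filtermapi.
  eapply filter_imp; [|apply filter_and; [exact H1| exact (H2 eps)]].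
  intros [a b] [Ha Hb]. simpl in *. exists (If a b). split; auto.
Qed.

Lemma mono_line N L : (forall eps, 0 < eps -> exists M, forall b, M < b -> Rabs (Phi N b - L) < eps) ->
  is_RInt_gen (mN N) (Rbar_locally m_infty) (Rbar_locally p_infty) (2 * L).
Proof.
  intros HL.
  apply (is_RInt_gen_intro _ _ _ _ (fun a b => Phi N b - Phi N a)).
  - apply Rbar_locally_filter.
  - apply Rbar_locally_filter.
  - apply filter_forall. intros [a b]; simpl. rewrite <- RInt_diff.
    apply (RInt_correct (V:=R_CompleteNormedModule)); apply mN_ex.
  - intros eps. destruct (HL (eps/2)) as [M HM]; [destruct eps; simpl; lra|].
    apply Filter_prod with (fun a => a < - M) (fun b => M < b).
    + exists (-M); auto.
    + exists M; auto.
    + intros a b Ha Hb; simpl.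
      pose proof (HM b Hb). pose proof (HM (-a) ltac:(lra)).
      rewrite Phi_odd in H0.
      replace (Phi N b - Phi N a - 2 * L) with ((Phi N b - L) + (- Phi N a - L)) by ring.
      eapply Rle_lt_trans; [apply Rabs_triang|]. lra.
Qed.

Definition gint (s t : R) := Rpower t (s - 1) * exp (- t).

Lemma gint_cont s t : 0 < t -> continuous (gint s) t.
Proof. intros Ht. apply cont_of_derive. unfold gint, Rpower. auto_derive. auto. Qed.

Lemma root6_pos x : 0 < Rpower x (1/6).
Proof. unfold Rpower; apply exp_pos. Qed.

Lemma root6_pow x : 0 < x -> (Rpower x (1/6))^6 = x.
Proof.
  intros Hx. rewrite <- (Rpower_pow 6 _ (root6_pos x)). rewrite Rpower_mult.
  replace (1/6 * INR 6) with 1 by (simpl; field). apply Rpower_1; auto.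
Qed.

Lemma root6_of_pow y : 0 < y -> Rpower (y^6) (1/6) = y.
Proof.
  intros Hy. rewrite <- (Rpower_pow 6 y Hy). rewrite Rpower_mult.
  replace (INR 6 * (1/6)) with 1 by (simpl; field). apply Rpower_1; auto.
Qed.

Lemma root6_lt x y : 0 < x < y -> Rpower x (1/6) < Rpower y (1/6).
Proof. intros H; apply Rlt_Rpower_l; lra. Qed.

Lemma gint_pt N y : 0 < y ->
  6 * y^5 * gint ((2 * INR N + 1)/6) (y^6) = 6 * mN N y.
Proof.
  intros Hy. unfold gint, mN.
  rewrite <- (Rpower_pow 6 y Hy), Rpower_mult.
  rewrite <- (Rpower_pow 5 y Hy).
  replace (y^(2*N)) with (Rpower y (INR 5 + INR 6 * ((2 * INR N + 1) / 6 - 1))).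
  - rewrite Rpower_plus. ring.
  - rewrite <- Rpower_pow by auto. f_equal. rewrite mult_INR. simpl. field.
Qed.

Lemma gamma_sub N a b : 0 < a -> 0 < b ->
  is_RInt (gint ((2 * INR N + 1)/6)) (a^6) (b^6) (6 * (Phi N b - Phi N a)).
Proof.
  intros Ha Hb. set (s := (2 * INR N + 1)/6).
  assert (Hpos : forall x, Rmin a b <= x <= Rmax a b -> 0 < x).
  { intros x [Hx _]. apply Rlt_le_trans with (Rmin a b); auto. apply Rmin_glb_lt; auto. }
  assert (Hc := is_RInt_comp (V:=R_CompleteNormedModule) (gint s) (fun x => x^6) (fun x => 6 * x^5) a b).
  assert (Hex : ex_RInt (gint s) (a^6) (b^6)).
  { apply ex_RInt_cont. intros z Hz. apply gint_cont.
    apply Rlt_le_trans with (Rmin (a^6) (b^6)); [apply Rmin_glb_lt; apply pow_lt; auto| apply Hz]. }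
  replace (6 * (Phi N b - Phi N a)) with (RInt (gint s) (a^6) (b^6)).
  { apply (RInt_correct (V:=R_CompleteNormedModule)); auto. }
  assert (H1 : is_RInt (fun y => scal (6 * y^5) (gint s (y^6))) a b (RInt (gint s) (a^6) (b^6))).
  { apply Hc.
    - intros x Hx. apply gint_cont. apply pow_lt. apply Hpos; auto.
    - intros x Hx. split.
      + auto_derive; auto. ring.
      + apply cont_of_derive. auto_derive. auto. }
  assert (H2 : is_RInt (fun y => scal (6 * y^5) (gint s (y^6))) a b (scal 6 (RInt (mN N) a b))).
  { apply is_RInt_ext with (fun y => scal 6 (mN N y)).
    - intros x Hx. unfold scal; simpl; unfold mult; simpl. unfold s. symmetry. apply gint_pt.
      apply Hpos. lra.
    - apply (is_RInt_scal (V:=R_NormedModule)). apply (RInt_correct (V:=R_CompleteNormedModule)). apply mN_ex. }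
  apply (is_RInt_unique (V:=R_CompleteNormedModule)) in H1.
  apply (is_RInt_unique (V:=R_CompleteNormedModule)) in H2.
  rewrite H1 in H2. rewrite H2. unfold scal; simpl; unfold mult; simpl.
  rewrite RInt_diff. reflexivity.
Qed.

Lemma gamma_half N L : (forall eps, 0 < eps -> exists M, forall b, M < b -> Rabs (Phi N b - L) < eps) ->
  is_RInt_gen (gint ((2 * INR N + 1)/6)) (at_right 0) (Rbar_locally p_infty) (6 * L).
Proof.
  intros HL.
  apply (is_RInt_gen_intro _ _ _ _ (fun e M => 6 * (Phi N (Rpower M (1/6)) - Phi N (Rpower e (1/6))))).
  - apply at_right_proper_filter.
  - apply Rbar_locally_filter.
  - apply Filter_prod with (fun e => 0 < e) (fun M => 0 < M).
    + exists (mkposreal 1 Rlt_0_1). intros y _ Hy; auto.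
    + exists 0; auto.
    + intros e M He HM; simpl.
      pose proof (gamma_sub N (Rpower e (1/6)) (Rpower M (1/6)) (root6_pos e) (root6_pos M)) as H.
      rewrite !root6_pow in H by auto. exact H.
  - intros [eps Heps]; simpl.
    destruct (HL (eps/12)) as [M0 HM0]; [lra|].
    set (d := Rmin 1 (eps/12)).
    assert (Hd : 0 < d) by (unfold d; apply Rmin_glb_lt; lra).
    assert (Hd6 : 0 < d^6) by (apply pow_lt; auto).
    apply Filter_prod with (fun e => 0 < e < d^6) (fun M => (Rmax 1 M0)^6 < M).
    + exists (mkposreal _ Hd6). intros y Hy Hy0. apply ball_R in Hy. change (Rabs (y - 0) < d^6) in Hy.
      rewrite Rminus_0_r in Hy. apply Rabs_def2 in Hy. lra.
    + exists ((Rmax 1 M0)^6); auto.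
    + intros e M He HM; simpl.
      assert (Ha : Rpower e (1/6) < d).
      { rewrite <- (root6_of_pow d Hd). apply root6_lt; lra. }
      assert (Ha0 := root6_pos e).
      assert (Hb : Rmax 1 M0 < Rpower M (1/6)).
      { assert (0 < Rmax 1 M0) by (apply Rlt_le_trans with 1; [lra| apply Rmax_l]).
        rewrite <- (root6_of_pow (Rmax 1 M0)) by auto. apply root6_lt. split; auto. apply pow_lt; auto. }
      assert (d <= 1) by apply Rmin_l. assert (d <= eps/12) by apply Rmin_r.
      pose proof (Phi_small N (Rpower e (1/6)) ltac:(lra)).
      pose proof (HM0 (Rpower M (1/6)) ltac:(pose proof (Rmax_r 1 M0); lra)).
      replace (6 * (Phi N (Rpower M (1/6)) - Phi N (Rpower e (1/6))) - 6 * L)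
        with (6 * (Phi N (Rpower M (1/6)) - L) + (- 6) * Phi N (Rpower e (1/6))) by ring.
      eapply Rle_lt_trans; [apply Rabs_triang|]. rewrite !Rabs_mult.
      rewrite (Rabs_right 6) by lra. rewrite (Rabs_left (-6)) by lra. lra.
Qed.

Lemma Gamma_val N L : (forall eps, 0 < eps -> exists M, forall b, M < b -> Rabs (Phi N b - L) < eps) ->
  Gamma ((2 * INR N + 1)/6) = 6 * L.
Proof.
  intros HL. unfold Gamma.
  apply (@is_RInt_gen_unique R_CompleteNormedModule (at_right 0) (Rbar_locally p_infty)
    (Proper_StrongProper _ (at_right_proper_filter 0)) (Proper_StrongProper _ (Rbar_locally_filter p_infty))).
  apply (gamma_half N L HL).
Qed.

Lemma mono_int N :
  is_RInt_gen (mN N) (Rbar_locally m_infty) (Rbar_locally p_infty) (Gamma ((2 * INR N + 1)/6) / 3).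
Proof.
  destruct (Phi_lim N) as [L HL].
  rewrite (Gamma_val N L HL). replace (6 * L / 3) with (2 * L) by field.
  apply mono_line; auto.
Qed.

Lemma poch_pos a k : 0 < a -> 0 < pochhammer a k.
Proof.
  intros Ha; induction k; simpl; [lra|]. apply Rmult_lt_0_compat; auto.
  pose proof (pos_INR k); lra.
Qed.

Lemma poch_split a i k : pochhammer a (i + k) = pochhammer a i * pochhammer (a + INR i) k.
Proof.
  induction k.
  - rewrite Nat.add_0_r; simpl; ring.
  - rewrite Nat.add_succ_r; simpl. rewrite IHk, plus_INR. ring.
Qed.

Lemma INR_fact_pos k : 0 < INR (Factorial.fact k).
Proof. apply lt_0_INR, Factorial.lt_O_fact. Qed.

Lemma poch_half i : pochhammer (1/2) i * INR (Factorial.fact i) * 4^i = INR (Factorial.fact (2*i)).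
Proof.
  induction i.
  - simpl; lra.
  - replace (2 * S i)%nat with (S (S (2 * i))) by lia.
    rewrite !fact_simpl, !mult_INR, <- IHi. simpl pochhammer. simpl pow.
    rewrite !S_INR, mult_INR. simpl INR. field.
Qed.

Lemma poch_three_half i : pochhammer (3/2) i * INR (Factorial.fact i) * 4^i = INR (Factorial.fact (2*i+1)).
Proof.
  induction i.
  - simpl; lra.
  - replace (2 * S i + 1)%nat with (S (S (2 * i + 1))) by lia.
    rewrite !fact_simpl, !mult_INR, <- IHi. simpl pochhammer. simpl pow.
    rewrite !S_INR, plus_INR, mult_INR. simpl INR. field.
Qed.

Lemma zeta_pow kappa tau i :
  (-1)^i * (- (1/4) * kappa^2 * tau^3)^i = / 4^i * (kappa^i)^2 * (tau^i)^3.
Proof.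
  rewrite !Rpow_mult_distr. rewrite <- !pow_mult.
  replace ((-1)^i * ((-(1/4))^i * kappa^(2*i) * tau^(3*i))) with
    (((-1) * (-(1/4)))^i * kappa^(2*i) * tau^(3*i)) by (rewrite Rpow_mult_distr; ring).
  replace ((-1) * (-(1/4))) with (/4) by field. rewrite pow_inv.
  rewrite (Nat.mul_comm 2 i), (Nat.mul_comm 3 i). reflexivity.
Qed.

Definition Ea tau kappa j i := tau^(j-i) * (kappa * tau^2)^(2*i) / (INR (Factorial.fact (j-i)) * INR (Factorial.fact (2*i))).
Definition Oa tau kappa j i := tau^(j-i) * (-(kappa * tau^2))^(2*i+1) / (INR (Factorial.fact (j-i)) * INR (Factorial.fact (2*i+1))).

Lemma kt_even kappa tau i : (kappa * tau^2)^(2*i) = (kappa^i)^2 * ((tau^i)^2)^2.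
Proof.
  rewrite Rpow_mult_distr, <- !pow_mult. f_equal; f_equal; lia.
Qed.

Lemma kt_odd kappa tau i : (-(kappa * tau^2))^(2*i+1) = - ((kappa^i)^2 * ((tau^i)^2)^2) * (kappa * tau^2).
Proof.
  rewrite pow_add, pow_1, pow_mult.
  replace ((-(kappa * tau^2))^2) with ((kappa * tau^2)^2) by ring.
  rewrite <- pow_mult, kt_even. ring.
Qed.

Lemma lagE tau kappa j :
  tau^j * laguerre j (-(1/2)) (-(1/4) * kappa^2 * tau^3) / pochhammer (1/2) j = sum_n (Ea tau kappa j) j.
Proof.
  assert (Hp := poch_pos (1/2) j ltac:(lra)).
  unfold laguerre.
  replace (tau^j * sum_n _ j / pochhammer (1/2) j) with
    (@mult R_Ring (tau^j / pochhammer (1/2) j) (sum_n (fun i => (-1) ^ i * pochhammer (- (1 / 2) + INR i + 1) (j - i) /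
     (INR (Factorial.fact (j - i)) * INR (Factorial.fact i)) * (- (1 / 4) * kappa ^ 2 * tau ^ 3) ^ i) j))
    by (unfold mult; simpl; field; lra).
  rewrite <- (sum_n_mult_l (K:=R_Ring)). apply sum_n_ext_loc. intros i Hi. change (@mult R_Ring ?a ?b) with (Rmult a b). match goal with |- @eq _ ?x ?y => change (@eq R x y) end.
  unfold Ea. set (k := (j - i)%nat). assert (Hj : j = (i + k)%nat) by (unfold k; lia).
  clearbody k. subst j.
  rewrite poch_split. replace (-(1/2) + INR i + 1) with (1/2 + INR i) by field.
  rewrite <- poch_half.
  match goal with |- ?A / ?B * ((-1)^i * ?P / ?C * ?Z) = _ =>
    replace (A / B * ((-1)^i * P / C * Z)) with (A / B * (P / C) * ((-1)^i * Z)) by (unfold Rdiv; ring) end.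
  rewrite zeta_pow, kt_even, pow_add.
  assert (H1 := poch_pos (1/2) i ltac:(lra)).
  assert (H2 := poch_pos (1/2 + INR i) k ltac:(pose proof (pos_INR i); lra)).
  assert (H3 := INR_fact_pos k). assert (H4 := INR_fact_pos i).
  assert (H5 : 0 < 4^i) by (apply pow_lt; lra).
  revert H1 H2 H3 H4 H5.
  generalize (pochhammer (1/2) i) (pochhammer (1/2 + INR i) k) (INR (Factorial.fact k)) (INR (Factorial.fact i)) (4^i).
  intros. field. repeat split; lra.
Qed.

Lemma lagO tau kappa j :
  - kappa * tau^(j+2) * laguerre j (1/2) (-(1/4) * kappa^2 * tau^3) / pochhammer (3/2) j = sum_n (Oa tau kappa j) j.
Proof.
  assert (Hp := poch_pos (3/2) j ltac:(lra)).
  unfold laguerre.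
  replace (- kappa * tau^(j+2) * sum_n _ j / pochhammer (3/2) j) with
    (@mult R_Ring (- kappa * tau^(j+2) / pochhammer (3/2) j) (sum_n (fun i => (-1) ^ i * pochhammer (1 / 2 + INR i + 1) (j - i) /
     (INR (Factorial.fact (j - i)) * INR (Factorial.fact i)) * (- (1 / 4) * kappa ^ 2 * tau ^ 3) ^ i) j))
    by (unfold mult; simpl; field; lra).
  rewrite <- (sum_n_mult_l (K:=R_Ring)). apply sum_n_ext_loc. intros i Hi. change (@mult R_Ring ?a ?b) with (Rmult a b). match goal with |- @eq _ ?x ?y => change (@eq R x y) end.
  unfold Oa. set (k := (j - i)%nat). assert (Hj : j = (i + k)%nat) by (unfold k; lia).
  clearbody k. subst j.
  rewrite poch_split. replace (1/2 + INR i + 1) with (3/2 + INR i) by field.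
  rewrite <- poch_three_half.
  match goal with |- ?A / ?B * ((-1)^i * ?P / ?C * ?Z) = _ =>
    replace (A / B * ((-1)^i * P / C * Z)) with (A / B * (P / C) * ((-1)^i * Z)) by (unfold Rdiv; ring) end.
  rewrite zeta_pow, kt_odd, !pow_add.
  assert (H1 := poch_pos (3/2) i ltac:(lra)).
  assert (H2 := poch_pos (3/2 + INR i) k ltac:(pose proof (pos_INR i); lra)).
  assert (H3 := INR_fact_pos k). assert (H4 := INR_fact_pos i).
  assert (H5 : 0 < 4^i) by (apply pow_lt; lra).
  revert H1 H2 H3 H4 H5.
  generalize (pochhammer (3/2) i) (pochhammer (3/2 + INR i) k) (INR (Factorial.fact k)) (INR (Factorial.fact i)) (4^i).
  intros. field. repeat split; lra.
Qed.


Lemma sum_n_Rmult_r (u : nat -> R) a n : sum_n (fun k => u k * a) n = sum_n u n * a.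
Proof.
  induction n. rewrite !sum_O; reflexivity.
  rewrite !sum_Sn, IHn. change (@plus R_AbelianMonoid ?x ?y) with (Rplus x y). fixR. ring.
Qed.

Lemma sum_n_Rmult_l (u : nat -> R) a n : sum_n (fun k => a * u k) n = a * sum_n u n.
Proof.
  induction n. rewrite !sum_O; reflexivity.
  rewrite !sum_Sn, IHn. change (@plus R_AbelianMonoid ?x ?y) with (Rplus x y). fixR. ring.
Qed.

Lemma sum_n_Rplus (u v : nat -> R) n : sum_n (fun k => u k + v k) n = sum_n u n + sum_n v n.
Proof.
  induction n. rewrite !sum_O; reflexivity.
  rewrite !sum_Sn, IHn. change (@plus R_AbelianMonoid ?x ?y) with (Rplus x y). fixR. ring.
Qed.

Definition Qj j y z := sum_n (fun i => cc (j - i) y * (cc (2*i) z + cc (2*i+1) z)) j.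

Lemma z_even kappa tau x i : (-(kappa * tau^2 * x^2))^(2*i) = (kappa*tau^2)^(2*i) * x^(4*i).
Proof.
  replace (-(kappa * tau^2 * x^2)) with ((-(kappa * tau^2)) * x^2) by ring.
  rewrite Rpow_mult_distr, !pow_mult.
  replace ((-(kappa * tau^2))^2) with ((kappa * tau^2)^2) by ring.
  rewrite <- !pow_mult. f_equal. f_equal. lia.
Qed.

Lemma z_odd kappa tau x i : (-(kappa * tau^2 * x^2))^(2*i+1) = (-(kappa*tau^2))^(2*i+1) * x^(4*i+2).
Proof.
  replace (-(kappa * tau^2 * x^2)) with ((-(kappa * tau^2)) * x^2) by ring.
  rewrite Rpow_mult_distr, <- pow_mult. f_equal. f_equal. lia.
Qed.

Lemma Qj_expand tau kappa x j : Qj j (tau * x^4) (-(kappa * tau^2 * x^2)) =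
  sum_n (Ea tau kappa j) j * x^(4*j) + sum_n (Oa tau kappa j) j * x^(4*j+2).
Proof.
  unfold Qj. rewrite <- !sum_n_Rmult_r, <- sum_n_Rplus. apply sum_n_ext_loc. intros i Hi. fixR.
  unfold Ea, Oa. set (k := (j - i)%nat). assert (Hj : j = (i + k)%nat) by (unfold k; lia).
  clearbody k. subst j. replace (i + k - i)%nat with k by lia.
  unfold cc. rewrite z_even, z_odd, Rpow_mult_distr, <- pow_mult.
  replace (4 * (i + k))%nat with (4 * k + 4 * i)%nat by lia.
  replace (4 * (i + k) + 2)%nat with (4 * k + (4 * i + 2))%nat by lia.
  rewrite !pow_add.
  assert (H3 := INR_fact_pos k). assert (H4 := INR_fact_pos (2*i)). assert (H5 := INR_fact_pos (2*i+1)).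
  replace (4 * i + 2)%nat with (4 * i + 2)%nat by reflexivity.
  field. lra.
Qed.

Lemma mu_term_split n tau kappa j : mu_term n tau kappa j =
  Gamma ((2 * INR (n + 2*j) + 1)/6) * sum_n (Ea tau kappa j) j +
  Gamma ((2 * INR (n + 2*j + 1) + 1)/6) * sum_n (Oa tau kappa j) j.
Proof.
  unfold mu_term. rewrite <- lagE, <- lagO.
  replace (2 / 3 * INR j + 1 / 3 * INR n + 1 / 6) with ((2 * INR (n + 2*j) + 1)/6)
    by (rewrite plus_INR, mult_INR; simpl; field).
  replace (2 / 3 * INR j + 1 / 3 * INR n + 1 / 2) with ((2 * INR (n + 2*j + 1) + 1)/6)
    by (rewrite !plus_INR, mult_INR; simpl; field).
  assert (H1 := poch_pos (1/2) j ltac:(lra)). assert (H2 := poch_pos (3/2) j ltac:(lra)).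
  field. lra.
Qed.

Definition dd i z := cc (2*i) z + cc (2*i+1) z.
Definition AA K y := sum_n (fun a => cc a y) K.

Lemma sumR_Sn (u : nat -> R) n : sum_n u (S n) = sum_n u n + u (S n).
Proof. rewrite sum_Sn; reflexivity. Qed.

Lemma Q_swap J y z : sum_n (fun j => Qj j y z) J = sum_n (fun i => dd i z * AA (J - i) y) J.
Proof.
  induction J.
  - rewrite !sum_O. unfold Qj, AA. rewrite !sum_O. simpl. unfold dd. change (2*0)%nat with 0%nat. change (0+1)%nat with 1%nat. fixR. ring.
  - rewrite !sumR_Sn, IHJ. rewrite Nat.sub_diag.
    assert (E : sum_n (fun i => dd i z * AA (S J - i) y) J =
                sum_n (fun i => dd i z * AA (J - i) y) J + sum_n (fun i => cc (S J - i) y * dd i z) J).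
    { rewrite <- sum_n_Rplus. apply sum_n_ext_loc. intros i Hi. fixR.
      replace (S J - i)%nat with (S (J - i)) by lia. unfold AA. rewrite sumR_Sn. ring. }
    rewrite E. unfold Qj. rewrite sumR_Sn. rewrite Nat.sub_diag. unfold AA. rewrite sum_O.
    fold (dd (S J) z). fixR.
    assert (sum_n (fun i => cc (S J - i) y * (cc (2 * i) z + cc (2 * i + 1) z)) J =
            sum_n (fun i => cc (S J - i) y * dd i z) J) by reflexivity.
    rewrite H. ring.
Qed.

Lemma D_sum J z : sum_n (fun i => dd i z) J = sum_n (fun k => cc k z) (2*J+1).
Proof.
  induction J.
  - rewrite sum_O. simpl. rewrite sumR_Sn, sum_O. reflexivity.
  - rewrite sumR_Sn, IHJ. replace (2 * S J + 1)%nat with (S (S (2 * J + 1))) by lia.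
    rewrite !sumR_Sn. unfold dd. replace (S (2*J+1)) with (2 * S J)%nat by lia.
    replace (S (2 * S J)) with (2 * S J + 1)%nat by lia. fixR. ring.
Qed.

Lemma geom_half J : sum_n (fun i => (1/2)^i) J = 2 - (1/2)^J.
Proof.
  induction J.
  - rewrite sum_O. simpl. lra.
  - rewrite sumR_Sn, IHJ. simpl. lra.
Qed.

Lemma dd_bound i z : Rabs (dd i z) <= 2 * (1/2)^(2*i) * exp (2 * Rabs z).
Proof.
  unfold dd. eapply Rle_trans; [apply Rabs_triang|]. rewrite !cc_abs.
  assert (0 <= 2 * Rabs z) by (pose proof (Rabs_pos z); lra).
  pose proof (cc_le_exp _ (2*i) H). pose proof (cc_le_exp _ (2*i+1) H).
  assert (Hp : 0 <= (1/2)^(2*i)) by (apply pow_le; lra).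
  assert ((1/2)^(2*i+1) <= (1/2)^(2*i)) by (apply half_pow_mono; lia).
  assert (0 <= (1/2)^(2*i+1)) by (apply pow_le; lra).
  assert ((1/2)^(2*i) * cc (2*i) (2 * Rabs z) <= (1/2)^(2*i) * exp (2 * Rabs z)) by (apply Rmult_le_compat_l; auto).
  assert ((1/2)^(2*i+1) * cc (2*i+1) (2 * Rabs z) <= (1/2)^(2*i) * exp (2 * Rabs z)).
  { apply Rle_trans with ((1/2)^(2*i+1) * exp (2 * Rabs z)). apply Rmult_le_compat_l; auto.
    apply Rmult_le_compat_r; auto. left; apply exp_pos. }
  lra.
Qed.

Lemma sum_abs_le (u : nat -> R) n : Rabs (sum_n u n) <= sum_n (fun k => Rabs (u k)) n.
Proof.
  induction n. rewrite !sum_O; lra.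
  rewrite !sumR_Sn. eapply Rle_trans; [apply Rabs_triang|]. lra.
Qed.

Lemma sum_le_loc (u v : nat -> R) n : (forall k, (k <= n)%nat -> u k <= v k) -> sum_n u n <= sum_n v n.
Proof.
  intros H. induction n. rewrite !sum_O; auto.
  rewrite !sumR_Sn. assert (u (S n) <= v (S n)) by auto.
  assert (sum_n u n <= sum_n v n) by (apply IHn; intros; apply H; lia). lra.
Qed.

Lemma sum_n_Rminus (u v : nat -> R) n : sum_n (fun k => u k - v k) n = sum_n u n - sum_n v n.
Proof.
  induction n. rewrite !sum_O; reflexivity.
  rewrite !sumR_Sn, IHn. fixR. ring.
Qed.

Lemma err_bound J y z : Rabs (exp y * exp z - sum_n (fun j => Qj j y z) J) <=
  3 * (1/2)^J * exp (2 * Rabs y + 2 * Rabs z).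
Proof.
  rewrite Q_swap.
  replace (exp y * exp z - sum_n (fun i => dd i z * AA (J - i) y) J) with
    (sum_n (fun i => dd i z * (exp y - AA (J - i) y)) J + exp y * (exp z - sum_n (fun i => dd i z) J)).
  2:{ assert (Hs : sum_n (fun i => dd i z * (exp y - AA (J - i) y)) J =
        exp y * sum_n (fun i => dd i z) J - sum_n (fun i => dd i z * AA (J - i) y) J).
      { rewrite <- sum_n_Rmult_l, <- sum_n_Rminus. apply sum_n_ext_loc. intros. fixR. ring. }
      rewrite Hs. ring. }
  rewrite D_sum.
  eapply Rle_trans; [apply Rabs_triang|].
  set (E := exp (2 * Rabs y + 2 * Rabs z)).
  assert (HE : E = exp (2 * Rabs y) * exp (2 * Rabs z)) by (unfold E; rewrite exp_plus; reflexivity).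
  assert (Ey : 0 < exp (2 * Rabs y)) by apply exp_pos. assert (Ez : 0 < exp (2 * Rabs z)) by apply exp_pos.
  assert (H1 : Rabs (sum_n (fun i => dd i z * (exp y - AA (J - i) y)) J) <= 2 * (1/2)^J * E).
  { eapply Rle_trans; [apply sum_abs_le|].
    apply Rle_trans with (sum_n (fun i => (1/2)^J * E * (1/2)^i) J).
    - apply sum_le_loc. intros i Hi. rewrite Rabs_mult.
      pose proof (dd_bound i z). pose proof (exp_tail y (J - i)). fold (AA (J - i) y) in H0.
      apply Rle_trans with ((2 * (1/2)^(2*i) * exp (2 * Rabs z)) * ((1/2)^(S (J - i)) * exp (2 * Rabs y))).
      + apply Rmult_le_compat; auto using Rabs_pos.
      + replace ((1/2)^J * E * (1/2)^i) with (2 * ((1/2)^(2*i) * (1/2)^(S (J-i))) * exp (2 * Rabs z) * exp (2 * Rabs y)).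
        lra.
        rewrite HE, <- !pow_add. replace ((1/2)^J) with (2 * (1/2)^(S J)) by (simpl; field).
        replace (2 * i + S (J - i))%nat with (S J + i)%nat by lia. rewrite pow_add. ring.
    - rewrite sum_n_Rmult_l, geom_half.
      assert (0 <= (1/2)^J) by (apply pow_le; lra). assert (0 < E) by apply exp_pos. nra. }
  assert (H2 : Rabs (exp y * (exp z - sum_n (fun k => cc k z) (2 * J + 1))) <= (1/2)^J * E).
  { rewrite Rabs_mult. pose proof (exp_tail z (2*J+1)).
    assert (Rabs (exp y) <= exp (2 * Rabs y)).
    { rewrite Rabs_right by (left; apply exp_pos). apply exp_le_mono.
      pose proof (Rle_abs y). pose proof (Rabs_pos y). lra. }
    assert ((1/2)^(S (2*J+1)) <= (1/2)^J) by (apply half_pow_mono; lia).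
    rewrite HE. apply Rle_trans with (exp (2 * Rabs y) * ((1/2)^(S (2*J+1)) * exp (2 * Rabs z))).
    apply Rmult_le_compat; auto using Rabs_pos.
    assert (0 <= ((1/2)^J - (1/2)^(S (2*J+1))) * (exp (2 * Rabs y) * exp (2 * Rabs z))) by (apply Rmult_le_pos; nra). nra. }
  lra.
Qed.

Definition qj n tau kappa j x :=
  sum_n (Ea tau kappa j) j * mN (n + 2*j) x + sum_n (Oa tau kappa j) j * mN (n + 2*j + 1) x.
Definition gJ n tau kappa J x := sum_n (fun j => qj n tau kappa j x) J.

Lemma qj_eq n tau kappa j x :
  qj n tau kappa j x = x^(2*n) * exp (-(x^6)) * Qj j (tau * x^4) (-(kappa * tau^2 * x^2)).
Proof.
  unfold qj. rewrite Qj_expand. unfold mN.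
  replace (2 * (n + 2*j))%nat with (2*n + 4*j)%nat by lia.
  replace (2 * (n + 2*j + 1))%nat with (2*n + (4*j+2))%nat by lia.
  rewrite !pow_add. ring.
Qed.

Lemma gJ_eq n tau kappa J x :
  gJ n tau kappa J x = x^(2*n) * exp (-(x^6)) * sum_n (fun j => Qj j (tau * x^4) (-(kappa * tau^2 * x^2))) J.
Proof.
  unfold gJ. rewrite <- sum_n_Rmult_l. apply sum_n_ext. intros j. apply qj_eq.
Qed.

Definition FF := Rbar_locally m_infty.
Definition GG := Rbar_locally p_infty.

Lemma qj_int n tau kappa j :
  is_RInt_gen (qj n tau kappa j) FF GG (mu_term n tau kappa j / 3).
Proof.
  unfold FF, GG.
  assert (H1 := is_RInt_gen_scal (V:=R_NormedModule) (Fa:=Rbar_locally m_infty) (Fb:=Rbar_locally p_infty)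
     (mN (n + 2*j)) (sum_n (Ea tau kappa j) j) _ (mono_int (n + 2*j))).
  assert (H2 := is_RInt_gen_scal (V:=R_NormedModule) (Fa:=Rbar_locally m_infty) (Fb:=Rbar_locally p_infty)
     (mN (n + 2*j + 1)) (sum_n (Oa tau kappa j) j) _ (mono_int (n + 2*j + 1))).
  assert (H := is_RInt_gen_plus _ _ _ _ H1 H2).
  rewrite mu_term_split.
  replace ((Gamma ((2 * INR (n + 2 * j) + 1) / 6) * sum_n (Ea tau kappa j) j +
            Gamma ((2 * INR (n + 2 * j + 1) + 1) / 6) * sum_n (Oa tau kappa j) j) / 3)
    with (plus (scal (sum_n (Ea tau kappa j) j) (Gamma ((2 * INR (n + 2 * j) + 1) / 6) / 3))
               (scal (sum_n (Oa tau kappa j) j) (Gamma ((2 * INR (n + 2 * j + 1) + 1) / 6) / 3))).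
  - exact H.
  - unfold plus, scal; simpl; unfold mult; simpl. fixR. field.
Qed.

Lemma gJ_int n tau kappa J :
  is_RInt_gen (gJ n tau kappa J) FF GG (sum_n (mu_term n tau kappa) J / 3).
Proof.
  induction J.
  - apply is_RInt_gen_ext with (f := qj n tau kappa 0).
    + apply filter_forall. intros [a b] x _. unfold gJ. rewrite sum_O. reflexivity.
    + rewrite sum_O. apply qj_int.
  - assert (H := is_RInt_gen_plus _ _ _ _ IHJ (qj_int n tau kappa (S J))).
    rewrite sumR_Sn.
    replace ((sum_n (mu_term n tau kappa) J + mu_term n tau kappa (S J)) / 3) with
      (plus (sum_n (mu_term n tau kappa) J / 3) (mu_term n tau kappa (S J) / 3))
      by (unfold plus; simpl; fixR; field).
    apply is_RInt_gen_ext with (f := fun y => plus (gJ n tau kappa J y) (qj n tau kappa (S J) y)).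
    + apply filter_forall. intros [a b] x _. unfold gJ. rewrite sumR_Sn. reflexivity.
    + exact H.
Qed.

Lemma qj_cont n tau kappa j x : continuous (qj n tau kappa j) x.
Proof. unfold qj, mN. apply cont_of_derive. auto_derive. auto. Qed.

Lemma gJ_cont n tau kappa J x : continuous (gJ n tau kappa J) x.
Proof.
  induction J.
  - apply continuous_ext with (f := qj n tau kappa 0). intros; unfold gJ; rewrite sum_O; reflexivity.
    apply qj_cont.
  - apply continuous_ext with (f := fun y => plus (gJ n tau kappa J y) (qj n tau kappa (S J) y)).
    intros; unfold gJ; rewrite sumR_Sn; reflexivity.
    apply (continuous_plus (V:=R_NormedModule)); auto. apply qj_cont.
Qed.

Lemma f_cont n tau kappa x : continuous (mu_integrand n tau kappa) x.
Proof. unfold mu_integrand. apply cont_of_derive. auto_derive. auto. Qed.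

Definition hh n tau kappa x := x^(2*n) * exp (-(x^6) + (2 * Rabs tau) * x^4 + (2 * (Rabs kappa * tau^2)) * x^2).

Lemma hh_cont n tau kappa x : continuous (hh n tau kappa) x.
Proof. unfold hh. apply cont_of_derive. auto_derive. auto. Qed.

Lemma pt_bound n tau kappa J x :
  Rabs (mu_integrand n tau kappa x - gJ n tau kappa J x) <= 3 * (1/2)^J * hh n tau kappa x.
Proof.
  rewrite gJ_eq. unfold mu_integrand, hh.
  assert (E1 : exp (- (x ^ 6 - tau * x ^ 4 + kappa * tau ^ 2 * x ^ 2)) =
     exp (-(x^6)) * (exp (tau * x^4) * exp (-(kappa * tau^2 * x^2)))).
  { rewrite <- !exp_plus. f_equal. ring. }
  rewrite E1.
  set (y := tau * x^4). set (z := -(kappa * tau^2 * x^2)).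
  replace (x ^ (2 * n) * (exp (- x ^ 6) * (exp y * exp z)) -
           x ^ (2 * n) * exp (- x ^ 6) * sum_n (fun j => Qj j y z) J)
    with ((x ^ (2 * n) * exp (- x ^ 6)) * (exp y * exp z - sum_n (fun j => Qj j y z) J)) by ring.
  assert (Hp : 0 <= x ^ (2 * n) * exp (- x ^ 6)).
  { apply Rmult_le_pos; [apply pow_even_nonneg| left; apply exp_pos]. }
  rewrite Rabs_mult, (Rabs_right _ (Rle_ge _ _ Hp)).
  assert (Hy : Rabs y = Rabs tau * x^4).
  { unfold y. rewrite Rabs_mult, (Rabs_right (x^4)); auto.
    apply Rle_ge. replace 4%nat with (2*2)%nat by reflexivity. apply pow_even_nonneg. }
  assert (Hz : Rabs z = Rabs kappa * tau^2 * x^2).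
  { unfold z. rewrite Rabs_Ropp, !Rabs_mult, (Rabs_right (tau^2)), (Rabs_right (x^2)); auto;
    apply Rle_ge, pow2_ge_0. }
  replace (x ^ (2 * n) * exp (- x ^ 6 + 2 * Rabs tau * x ^ 4 + 2 * (Rabs kappa * tau ^ 2) * x ^ 2))
    with ((x ^ (2 * n) * exp (- x ^ 6)) * exp (2 * Rabs y + 2 * Rabs z)).
  2:{ rewrite Hy, Hz, Rmult_assoc, <- exp_plus. f_equal. f_equal. ring. }
  pose proof (err_bound J y z).
  replace (3 * (1 / 2) ^ J * (x ^ (2 * n) * exp (- x ^ 6) * exp (2 * Rabs y + 2 * Rabs z)))
    with ((x ^ (2 * n) * exp (- x ^ 6)) * (3 * (1 / 2) ^ J * exp (2 * Rabs y + 2 * Rabs z))) by ring.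
  apply Rmult_le_compat_l; auto.
Qed.

Lemma ex_cont_all (f : R -> R) a b : (forall x, continuous f x) -> ex_RInt f a b.
Proof. intros H; apply ex_RInt_cont; intros; apply H. Qed.

Lemma abs_le_inv a b : Rabs a <= b -> - b <= a <= b.
Proof. intros H. pose proof (Rle_abs a). pose proof (Rle_abs (-a)). rewrite Rabs_Ropp in H1. lra. Qed.

Lemma int_diff_bound n tau kappa : exists C, 0 <= C /\ forall J a b, a <= b ->
  Rabs (RInt (mu_integrand n tau kappa) a b - RInt (gJ n tau kappa J) a b) <= (1/2)^J * C.
Proof.
  destruct (poly_exp_bound n (2 * Rabs tau) (2 * (Rabs kappa * tau^2))) as [K [HK HKb]].
  { pose proof (Rabs_pos tau); lra. }
  { pose proof (Rabs_pos kappa); pose proof (pow2_ge_0 tau). apply Rmult_le_pos; [lra|]. apply Rmult_le_pos; lra. }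
  exists (3 * K * PI). split. { pose proof PI_RGT_0. apply Rmult_le_pos; lra. }
  intros J a b Hab.
  set (f := mu_integrand n tau kappa). set (g := gJ n tau kappa J). set (h := hh n tau kappa).
  set (c := 3 * (1/2)^J).
  assert (Hc : 0 <= c) by (unfold c; assert (0 <= (1/2)^J) by (apply pow_le; lra); lra).
  assert (Ef : ex_RInt f a b) by (apply ex_cont_all; apply f_cont).
  assert (Eg : ex_RInt g a b) by (apply ex_cont_all; apply gJ_cont).
  assert (Eh : ex_RInt h a b) by (apply ex_cont_all; apply hh_cont).
  assert (Hh : RInt h a b <= K * PI).
  { apply int_bound; auto; [apply hh_cont| lra]. }
  assert (Ech : ex_RInt (fun x => c * h x) a b) by (apply ex_cont_all; intros; unfold h, hh; apply cont_of_derive; auto_derive; auto).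
  assert (Emch : ex_RInt (fun x => - (c * h x)) a b) by (apply ex_cont_all; intros; unfold h, hh; apply cont_of_derive; auto_derive; auto).
  assert (Ed : ex_RInt (fun x => f x - g x) a b).
  { apply ex_cont_all. intros x. apply (continuous_minus (V:=R_NormedModule)); [apply f_cont| apply gJ_cont]. }
  assert (Hd : RInt (fun x => f x - g x) a b = RInt f a b - RInt g a b).
  { apply (RInt_minus (V:=R_CompleteNormedModule)); auto. }
  assert (Hs : RInt (fun x => c * h x) a b = c * RInt h a b).
  { apply (RInt_scal (V:=R_CompleteNormedModule)); auto. }
  assert (Ho : RInt (fun x => - (c * h x)) a b = - RInt (fun x => c * h x) a b).
  { apply (RInt_opp (V:=R_CompleteNormedModule)); auto. }
  assert (U : RInt (fun x => f x - g x) a b <= RInt (fun x => c * h x) a b).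
  { apply RInt_le; auto. intros x _. pose proof (pt_bound n tau kappa J x). apply abs_le_inv in H. unfold c, f, g, h. lra. }
  assert (L : RInt (fun x => - (c * h x)) a b <= RInt (fun x => f x - g x) a b).
  { apply RInt_le; auto. intros x _. pose proof (pt_bound n tau kappa J x). apply abs_le_inv in H. unfold c, f, g, h. lra. }
  rewrite <- Hd. apply Rabs_le. rewrite Ho, Hs in L. rewrite Hs in U.
  assert (c * RInt h a b <= c * (K * PI)) by (apply Rmult_le_compat_l; auto).
  unfold c in *. split; lra.
Qed.

Lemma gen_elim (g : R -> R) l : is_RInt_gen g FF GG l -> (forall x, continuous g x) ->
  forall eps : posreal, filter_prod FF GG (fun ab => Rabs (RInt g (fst ab) (snd ab) - l) < eps).
Proof.
  intros H Hc eps. specialize (H (ball l eps) (locally_ball l eps)). unfold filtermapi in H.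
  eapply filter_imp; [|exact H]. intros [a b] [y [Hy Hb]]. simpl in *.
  rewrite (is_RInt_unique (V:=R_CompleteNormedModule) _ _ _ _ Hy). apply ball_R in Hb. exact Hb.
Qed.

Lemma FF_proper : ProperFilter FF.
Proof. apply Rbar_locally_filter. Qed.
Lemma GG_proper : ProperFilter GG.
Proof. apply Rbar_locally_filter. Qed.

Lemma ab_filter : filter_prod FF GG (fun ab => fst ab < 0 < snd ab).
Proof.
  apply Filter_prod with (fun a => a < 0) (fun b => 0 < b).
  - exists 0; auto.
  - exists 0; auto.
  - intros; simpl; auto.
Qed.

Lemma cauchy_bound n tau kappa C :
  (forall J a b, a <= b ->
    Rabs (RInt (mu_integrand n tau kappa) a b - RInt (gJ n tau kappa J) a b) <= (1/2)^J * C) ->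
  forall J J', Rabs (sum_n (mu_term n tau kappa) J / 3 - sum_n (mu_term n tau kappa) J' / 3)
     <= (1/2)^J * C + (1/2)^J' * C.
Proof.
  intros HB J J'. apply le_epsilon. intros eps Heps.
  assert (He : 0 < eps / 2) by lra.
  set (e := mkposreal _ He).
  assert (P := filter_and _ _ (filter_and _ _ (gen_elim _ _ (gJ_int n tau kappa J) (gJ_cont n tau kappa J) e)
                                             (gen_elim _ _ (gJ_int n tau kappa J') (gJ_cont n tau kappa J') e))
                 ab_filter).
  destruct (@filter_ex _ _ (@filter_prod_proper _ _ FF GG FF_proper GG_proper) _ P) as [[a b] [[H1 H2] H3]].
  simpl in H1, H2, H3.
  pose proof (HB J a b ltac:(lra)). pose proof (HB J' a b ltac:(lra)).
  set (F := RInt (mu_integrand n tau kappa) a b) in *.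
  set (G1 := RInt (gJ n tau kappa J) a b) in *.
  set (G2 := RInt (gJ n tau kappa J') a b) in *.
  apply abs_le_inv in H; apply abs_le_inv in H0.
  apply Rabs_def2 in H1; apply Rabs_def2 in H2.
  apply Rabs_le. unfold e in *; simpl in *. lra.
Qed.

Theorem theorem6p12 (tau kappa : R) (n : nat) :
  exists S : R,
    is_series (mu_term n tau kappa) S /\
    is_RInt_gen (mu_integrand n tau kappa)
      (Rbar_locally m_infty) (Rbar_locally p_infty) (1 / 3 * S).
Proof.
  destruct (int_diff_bound n tau kappa) as [C [HC HB]].
  set (u := sum_n (mu_term n tau kappa)).
  assert (HCB := cauchy_bound n tau kappa C HB).
  assert (Hgeom : forall y, 0 < y -> exists N, forall m, (N <= m)%nat -> (1/2)^m < y).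
  { intros y Hy. destruct (pow_lt_1_zero (1/2) ltac:(rewrite Rabs_right; lra) y Hy) as [N HN].
    exists N. intros m Hm. specialize (HN m Hm). rewrite Rabs_right in HN; auto. apply Rle_ge, pow_le; lra. }
  assert (Hc : ex_lim_seq_cauchy u).
  { intros [eps Heps]. simpl.
    destruct (Hgeom (eps / (12 * (C + 1)))) as [N HN].
    { apply Rdiv_lt_0_compat; lra. }
    exists N. intros p q Hp Hq.
    pose proof (HCB p q). pose proof (HN p Hp). pose proof (HN q Hq).
    assert (Hy : eps / (12 * (C+1)) * C <= eps / 12).
    { unfold Rdiv. rewrite Rinv_mult. 
      assert (0 < / (C + 1)) by (apply Rinv_0_lt_compat; lra).
      assert (/ (C+1) * C <= 1).
      { apply Rmult_le_reg_l with (C + 1); [lra|]. field_simplify; lra. }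
      nra. }
    assert ((1/2)^p * C <= eps / (12 * (C+1)) * C) by (apply Rmult_le_compat_r; lra).
    assert ((1/2)^q * C <= eps / (12 * (C+1)) * C) by (apply Rmult_le_compat_r; lra).
    unfold u in *.
    replace (sum_n (mu_term n tau kappa) p - sum_n (mu_term n tau kappa) q) with
      (3 * (sum_n (mu_term n tau kappa) p / 3 - sum_n (mu_term n tau kappa) q / 3)) by field.
    rewrite Rabs_mult, (Rabs_right 3) by lra. lra. }
  apply ex_lim_seq_cauchy_corr in Hc. destruct Hc as [S HS].
  exists S. split.
  { exact HS. }
  apply (is_RInt_gen_intro _ _ _ _ (fun a b => RInt (mu_integrand n tau kappa) a b)).
  - apply Rbar_locally_filter.
  - apply Rbar_locally_filter.
  - apply filter_forall. intros [a b]. simpl. apply (RInt_correct (V:=R_CompleteNormedModule)).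
    apply ex_cont_all, f_cont.
  - intros [eps Heps].
    destruct (Hgeom (eps / (3 * (C + 1)))) as [N1 HN1].
    { apply Rdiv_lt_0_compat; lra. }
    apply is_lim_seq_spec in HS.
    assert (He3 : 0 < eps / 3) by lra.
    destruct (HS (mkposreal _ He3)) as [N2 HN2].
    set (J := Nat.max N1 N2).
    pose proof (HN1 J (Nat.le_max_l _ _)). pose proof (HN2 J (Nat.le_max_r _ _)). simpl in H0.
    assert (Hy : eps / (3 * (C+1)) * C <= eps / 3).
    { unfold Rdiv. rewrite Rinv_mult. 
      assert (0 < / (C + 1)) by (apply Rinv_0_lt_compat; lra).
      assert (/ (C+1) * C <= 1).
      { apply Rmult_le_reg_l with (C + 1); [lra|]. field_simplify; lra. }
      nra. }
    assert ((1/2)^J * C <= eps / (3 * (C+1)) * C) by (apply Rmult_le_compat_r; lra).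
    eapply filter_imp; [|apply (filter_and _ _ (gen_elim _ _ (gJ_int n tau kappa J) (gJ_cont n tau kappa J) (mkposreal _ He3)) ab_filter)].
    intros [a b] [H3 H4]. simpl in H3, H4 |- *.
    pose proof (HB J a b ltac:(lra)) as HBJ.
    apply abs_le_inv in HBJ. apply Rabs_def2 in H3. apply Rabs_def2 in H0.
    unfold u in H0.
    apply Rabs_def1; lra.
Qed.
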